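(* There is a constant $C$ such that for every two NFAs $A$ and $B$, each with at most $n$ states and over a common alphabet of $m$ input letters, there exist two DFAs $A'$ and $B'$ with at most $C mn$ states and over an alphabet of at most $C mn$ letters such that, for every $r\ge 1$, there is a tower of height $r$ between $L(A)$ and $L(B)$ if and only if there is a tower of height $r$ between $L(A')$ and $L(B')$. In particular, there is an infinite tower between $L(A)$ and $L(B)$ if and only if there is an infinite tower between $L(A')$ and $L(B')$.
   Context: For strings $v=a_1\cdots a_k$ and $w$, $v\preccurlyeq w$ if $w\in\Sigma^*a_1\Sigma^*a_2\Sigma^*\cdots\Sigma^*a_k\Sigma^*$. A sequence $(w_i)_{i=1}^r$ of strings is a tower between languages $K$ and $L$ if $w_1\in K\cup L$ and for all $i=1,\dots,r-1$: $w_i\preccurlyeq w_{i+1}$, $w_i\in K$ implies $w_{i+1}\in L$, and $w_i\in L$ implies $w_{i+1}\in K$; $r$ is its height. An infinite tower is an infinite sequence with the same properties. *)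

(* Defs.v *)
From mathcomp Require Import all_boot.
Set Implicit Arguments. Unset Strict Implicit. Unset Printing Implicit Defensive.

Definition lang (Sigma : Type) := seq Sigma -> Prop.

Record nfa (Sigma : finType) := NFA {
  nstate : finType;
  ninit : {set nstate};
  nfinal : {set nstate};
  ntrans : nstate -> Sigma -> {set nstate} }.

Fixpoint nfa_accept_from (Sigma : finType) (A : nfa Sigma) (q : nstate A)
    (w : seq Sigma) : bool :=
  match w with
  | [::] => q \in nfinal A
  | a :: w' => [exists q' in ntrans q a, nfa_accept_from q' w']
  end.

Definition nfa_lang (Sigma : finType) (A : nfa Sigma) : lang Sigma :=
  fun w => exists2 q, q \in ninit A & nfa_accept_from q w.

Record dfa (Sigma : finType) := DFA {
  dstate : finType;
  dinit : dstate;
  dfinal : {set dstate};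
  dtrans : dstate -> Sigma -> dstate }.

Definition dfa_lang (Sigma : finType) (A : dfa Sigma) : lang Sigma :=
  fun w => foldl (@dtrans _ A) (dinit A) w \in dfinal A.

(* Subword (scattered subsequence) order: v ≼ w  is  subseq v w. *)

Definition tower_step (T : eqType) (K L : lang T) (u v : seq T) : Prop :=
  subseq u v /\ (K u -> L v) /\ (L u -> K v).

Definition tower_of_height (T : eqType) (K L : lang T) (r : nat) : Prop :=
  exists w : nat -> seq T,
    (K (w 0) \/ L (w 0)) /\
    forall i, i.+1 < r -> tower_step K L (w i) (w i.+1).

Definition infinite_tower (T : eqType) (K L : lang T) : Prop :=
  exists w : nat -> seq T,
    (K (w 0) \/ L (w 0)) /\ forall i, tower_step K L (w i) (w i.+1).

(* Main.v *)
Require Import Defs.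
From mathcomp Require Import all_boot.
From Stdlib Require Import ClassicalEpsilon Classical.
From mathcomp Require Import zify.
Set Implicit Arguments. Unset Strict Implicit. Unset Printing Implicit Defensive.
Lemma pmap_subseq (U T : eqType) (f : U -> option T) (u v : seq U) :
  subseq u v -> subseq (pmap f u) (pmap f v).
Proof.
elim: v u => [|y v IH] [|x u] //=; first by rewrite sub0seq.
case: eqP => [<- /IH|_ /IH H].
  by case: (f x) => [z|] //=; rewrite eqxx.
case: (f y) => [z|] //=; exact: subseq_trans H (subseq_cons _ _).
Qed.

Lemma mem_gen (V : eqType) (K0 L0 : lang V) (ok : nat -> Prop) (w : nat -> seq V) :
 (forall i, ok i.+1 -> ok i) -> (K0 (w 0) \/ L0 (w 0)) ->
 (forall i, ok i.+1 -> tower_step K0 L0 (w i) (w i.+1)) ->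
 forall i, ok i -> K0 (w i) \/ L0 (w i).
Proof.
move=> down h0 hs; elim=> [|i IH] // oki.
have [_ [hk hl]] := hs i oki. case: (IH (down _ oki)) => [/hk|/hl]; tauto.
Qed.

Definition build (U : Type) (inh : inhabited U) (P0 : U -> Prop)
  (Pn : nat -> U -> U -> Prop) : nat -> U :=
  fix b i := match i with 0 => epsilon inh P0 | i'.+1 => epsilon inh (Pn i' (b i')) end.

Section Transfer.
Variables (T U : eqType) (pi : seq U -> seq T).
Hypothesis hpi : forall u v, subseq u v -> subseq (pi u) (pi v).
Hypothesis pi0 : pi [::] = [::].
Variables (K L : lang T) (K' L' : lang U).
Hypothesis disj : forall w, K w -> L w -> False.
Hypothesis sK : forall u, K' u -> K (pi u).
Hypothesis sL : forall u, L' u -> L (pi u).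
Hypothesis liftK : forall x w, subseq (pi x) w -> K w ->
  exists y, [/\ K' y, subseq x y & pi y = w].
Hypothesis liftL : forall x w, subseq (pi x) w -> L w ->
  exists y, [/\ L' y, subseq x y & pi y = w].

Lemma fwd (ok : nat -> Prop) (w : nat -> seq T) :
 (forall i, ok i.+1 -> ok i) -> (K (w 0) \/ L (w 0)) ->
 (forall i, ok i.+1 -> tower_step K L (w i) (w i.+1)) ->
 exists u, (K' (u 0) \/ L' (u 0)) /\
   forall i, ok i.+1 -> tower_step K' L' (u i) (u i.+1).
Proof.
move=> down h0 hs.
have mem := mem_gen down h0 hs.
pose Q i y := [/\ pi y = w i, K (w i) -> K' y & L (w i) -> L' y].
have inh : inhabited (seq U) := inhabits [::].
pose u := build inh (Q 0) (fun i x y => Q i.+1 y /\ subseq x y).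
have Q0 : Q 0 (u 0).
  apply: (epsilon_spec inh (Q 0)).
  have s0 : subseq (pi [::]) (w 0) by rewrite pi0 sub0seq.
  case: h0 => [hK|hL].
  - have [y [Ky _ py]] := liftK s0 hK.
    by exists y; split=> // Lw; case: (disj hK Lw).
  - have [y [Ly _ py]] := liftL s0 hL.
    by exists y; split=> // Kw; case: (disj Kw hL).
have ex_next : forall i, ok i.+1 -> Q i (u i) -> exists y, Q i.+1 y /\ subseq (u i) y.
  move=> i oki [pu hk hl].
  have [hsub [hK hL]] := hs i oki.
  have psub : subseq (pi (u i)) (w i.+1) by rewrite pu.
  case: (mem i (down _ oki)) => [Kw|Lw].
  - have [y [Ly sy py]] := liftL psub (hK Kw).
    exists y; split=> //; split=> // Kw'.
    by case: (disj Kw' (hK Kw)).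
  - have [y [Ky sy py]] := liftK psub (hL Lw).
    exists y; split=> //; split=> // Lw'.
    by case: (disj (hL Lw) Lw').
have Qall : forall i, ok i -> Q i (u i).
  elim=> [|i IH] oki //.
  have [y Hy] := ex_next i oki (IH (down _ oki)).
  by have [] := epsilon_spec inh (fun y => Q i.+1 y /\ subseq (u i) y) (ex_intro _ y Hy).
exists u; split.
  by case: Q0 => _ hk hl; case: h0 => [/hk|/hl]; tauto.
move=> i oki.
have [y Hy] := ex_next i oki (Qall i (down _ oki)).
have [Q1 sub] := epsilon_spec inh (fun y => Q i.+1 y /\ subseq (u i) y) (ex_intro _ y Hy).
have [pu _ _] := Qall i (down _ oki).
case: Q1 => pu1 hk1 hl1.
have [_ [hK hL]] := hs i oki.
split=> //; split.
- by move=> /sK; rewrite pu => /hK /hl1.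
- by move=> /sL; rewrite pu => /hL /hk1.
Qed.

Lemma bwd (ok : nat -> Prop) (u : nat -> seq U) :
 (forall i, ok i.+1 -> ok i) -> (K' (u 0) \/ L' (u 0)) ->
 (forall i, ok i.+1 -> tower_step K' L' (u i) (u i.+1)) ->
 exists w, (K (w 0) \/ L (w 0)) /\
   forall i, ok i.+1 -> tower_step K L (w i) (w i.+1).
Proof.
move=> down h0 hs.
have mem := mem_gen down h0 hs.
exists (fun i => pi (u i)); split.
  by case: h0 => [/sK|/sL]; tauto.
move=> i oki; have [hsub [hK hL]] := hs i oki.
split; first exact: hpi.
split.
- move=> Kw; case: (mem i (down _ oki)) => [/hK/sL //|/sL Lw].
  by case: (disj Kw Lw).
- move=> Lw; case: (mem i (down _ oki)) => [/sK Kw|/hL/sK //].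
  by case: (disj Kw Lw).
Qed.

Lemma transfer :
  (forall r, tower_of_height K L r <-> tower_of_height K' L' r) /\
  (infinite_tower K L <-> infinite_tower K' L').
Proof.
split.
  move=> r; split.
  - case=> w [h0 hs].
    have [u [h0' hs']] := fwd (ok := fun i => is_true (i < r)) (w := w)
       (fun i (h : i.+1 < r) => ltnW h) h0 hs.
    by exists u.
  - case=> w [h0 hs].
    have [u [h0' hs']] := bwd (ok := fun i => is_true (i < r)) (u := w)
       (fun i (h : i.+1 < r) => ltnW h) h0 hs.
    by exists u.
split.
- case=> w [h0 hs].
  have [u [h0' hs']] := fwd (ok := fun _ => True) (w := w) (fun _ _ => I) h0 (fun i _ => hs i).
  by exists u; split=> // i; apply: hs'.
- case=> w [h0 hs].
  have [u [h0' hs']] := bwd (ok := fun _ => True) (u := w) (fun _ _ => I) h0 (fun i _ => hs i).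
  by exists u; split=> // i; apply: hs'.
Qed.
End Transfer.
Section Constr.
Variables (Sig : finType) (A : nfa Sig) (G : finType) (sym : G -> option Sig)
  (own : G -> option (nstate A)) (injS : Sig -> G) (injO : nstate A -> G).
Hypothesis symS : forall a, sym (injS a) = Some a.
Hypothesis symO : forall q, sym (injO q) = None.
Hypothesis ownO : forall q, own (injO q) = Some q.

Local Notation St := (bool + (nstate A + nstate A * Sig))%type.
Definition delta (s : St) (g : G) : St :=
 match s with
 | inl true => match sym g with Some _ => inl false | None =>
     match own g with Some q => if q \in ninit A then inr (inl q) else inl false
     | None => inl true end end
 | inl false => inl false
 | inr (inl q) => match sym g with Some a => inr (inr (q, a)) | None => inr (inl q) end
 | inr (inr (q, a)) => match sym g with Some _ => inl false | None =>
     match own g with Some q' => if q' \in ntrans q a then inr (inl q') else inl false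
     | None => inr (inr (q, a)) end end
 end.
Definition fin : {set St} :=
  [set s | if s is inr (inl q) then q \in nfinal A else false].
Definition piS (u : seq G) := pmap sym u.

Definition Sem (s : St) (v : seq Sig) : Prop :=
 match s with
 | inl true => exists2 q, q \in ninit A & nfa_accept_from q v
 | inl false => False
 | inr (inl q) => nfa_accept_from q v
 | inr (inr (q, a)) => nfa_accept_from q (a :: v)
 end.

Lemma sound u s : foldl delta s u \in fin -> Sem s (piS u).
Proof.
elim: u s => [|g u IH] s /=.
  by rewrite inE; case: s => [[]|[q|[q a]]].
move/IH; rewrite /piS /=.
case: s => [[]|[q|[q a]]] /=; case E: (sym g) => [b|] //=.
- case: (own g) => [q|] //=; case: ifP => // qi H; by exists q.
- case: (own g) => [q'|] //=; case: ifP => // qi H.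
  by apply/existsP; exists q'; rewrite qi.
Qed.

Lemma keep q x : piS x = [::] -> foldl delta (inr (inl q)) x = inr (inl q).
Proof.
elim: x => [|g x IH] //=; rewrite /piS /=.
by case: (sym g) => [b|] //= /IH.
Qed.

Lemma decomp x b t : piS x = b :: t ->
  exists x1 g x2, [/\ x = x1 ++ g :: x2, piS x1 = [::], sym g = Some b & piS x2 = t].
Proof.
elim: x => [|g x IH] //=; rewrite /piS /=.
case E: (sym g) => [c|] /=.
  by case=> <- <-; exists [::], g, x.
move=> /IH [x1 [g' [x2 [-> h1 h2 h3]]]].
by exists (g :: x1), g', x2; split=> //; rewrite /piS /= E.
Qed.

Lemma piS_cat x y : piS (x ++ y) = piS x ++ piS y.
Proof. exact: pmap_cat. Qed.

Lemma lift_res w : forall q x, nfa_accept_from q w -> subseq (piS x) w ->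
  exists y, [/\ subseq x y, piS y = w & foldl delta (inr (inl q)) y \in fin].
Proof.
elim: w => [|a w IH] q x.
  move=> /= qf /eqP px.
  by exists x; split=> //; rewrite keep // inE.
move=> /= /existsP [q' /andP [qq' acc]] sx.
have caseB : subseq (piS x) w -> exists y, [/\ subseq x y, piS y = a :: w &
   foldl delta (inr (inl q)) y \in fin].
  move=> sw; have [y2 [s2 p2 f2]] := IH q' x acc sw.
  exists (injS a :: injO q' :: y2); split.
  - exact: subseq_trans s2 (subseq_trans (subseq_cons _ _) (subseq_cons _ _)).
  - by rewrite /piS /= symS symO -p2.
  - by rewrite /= symS /= symO ownO qq'.
move: sx; case E: (piS x) => [|b t] sx; first by apply: caseB; rewrite E sub0seq.
move: sx; rewrite /=; case: eqP => [ba st|nba st]; last by apply: caseB; rewrite E.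
have [x1 [g [x2 [ex p1 sg p2]]]] := decomp E.
have sx2 : subseq (piS x2) w by rewrite p2.
have [y2 [s2 p2' f2]] := IH q' x2 acc sx2.
exists (x1 ++ g :: injO q' :: y2); split.
- rewrite ex; apply: cat_subseq => //=; rewrite eqxx.
  exact: subseq_trans s2 (subseq_cons _ _).
- by rewrite piS_cat p1 /piS /= sg symO -ba -p2'.
- by rewrite foldl_cat keep //= sg /= symO ownO ba qq'.
Qed.

Definition D : dfa G := DFA (inl true : St) fin delta.

Lemma lift_start x w : nfa_lang A w -> subseq (piS x) w ->
  exists y, [/\ dfa_lang D y, subseq x y & piS y = w].
Proof.
case=> q0 q0i acc sw.
have [y [s p f]] := lift_res acc sw.
exists (injO q0 :: y); split.
- by rewrite /dfa_lang /= symO ownO q0i.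
- exact: subseq_trans s (subseq_cons _ _).
- by rewrite /piS /= symO.
Qed.

Lemma sound_lang u : dfa_lang D u -> nfa_lang A (piS u).
Proof. by move/sound. Qed.

Lemma card_St : #|dstate D| = 2 + (#|nstate A| + #|nstate A| * #|Sig|).
Proof. by rewrite !card_sum card_bool card_prod. Qed.
End Constr.

Lemma const_tower (T : eqType) (K L : lang T) x : K x -> L x ->
  (forall r, tower_of_height K L r) /\ infinite_tower K L.
Proof.
move=> Kx Lx; split; [move=> r|]; exists (fun _ => x); split; try by left.
- by move=> i _; split; [exact: subseq_refl | split].
- by move=> i; split; [exact: subseq_refl | split].
Qed.

Lemma ar1 m n a b : 0 < n -> 0 < m -> a <= n -> b <= n -> m + (a + b) <= 4 * m * n.
Proof. move=> n0 m0 ha hb. nia. Qed.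
Lemma ar2 m n a : 0 < n -> 0 < m -> a <= n -> 2 + (a + a * m) <= 4 * m * n.
Proof. move=> n0 m0 ha; have := leq_mul ha (leqnn m); nia. Qed.

Theorem theorem12 :
  exists C : nat,
    forall (n m : nat), 0 < n -> 0 < m ->
    forall (A B : nfa 'I_m),
      #|nstate A| <= n -> #|nstate B| <= n ->
      exists (k : nat) (A' B' : dfa 'I_k),
        [/\ k <= C * m * n,
            #|dstate A'| <= C * m * n,
            #|dstate B'| <= C * m * n,
            (forall r, 0 < r ->
               (tower_of_height (nfa_lang A) (nfa_lang B) r <->
                tower_of_height (dfa_lang A') (dfa_lang B') r))
          & (infinite_tower (nfa_lang A) (nfa_lang B) <->
             infinite_tower (dfa_lang A') (dfa_lang B'))].
Proof.
exists 4 => n m n0 m0 A B hA hB.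
have [[w [wA wB]]|nd] := classic (exists w, nfa_lang A w /\ nfa_lang B w).
  pose T1 : dfa 'I_1 := DFA tt [set: unit] (fun _ _ => tt).
  have [h1 h2] := const_tower wA wB.
  have e1 : dfa_lang T1 [::] by rewrite /dfa_lang inE.
  have [h3 h4] := const_tower e1 e1.
  exists 1, T1, T1; split => //.
  - lia.
  - rewrite card_unit; lia.
  - rewrite card_unit; lia.
pose G0 : finType := ('I_m + (nstate A + nstate B))%type.
pose sym (i : 'I_#|G0|) : option 'I_m := if enum_val i is inl a then Some a else None.
pose ownA (i : 'I_#|G0|) := if enum_val i is inr (inl q) then Some q else None.
pose ownB (i : 'I_#|G0|) := if enum_val i is inr (inr q) then Some q else None.
pose injS (a : 'I_m) : 'I_#|G0| := enum_rank (inl a : G0).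
pose injA (q : nstate A) : 'I_#|G0| := enum_rank (inr (inl q) : G0).
pose injB (q : nstate B) : 'I_#|G0| := enum_rank (inr (inr q) : G0).
have symS a : sym (injS a) = Some a by rewrite /sym /injS enum_rankK.
have symA q : sym (injA q) = None by rewrite /sym /injA enum_rankK.
have symB q : sym (injB q) = None by rewrite /sym /injB enum_rankK.
have ownAA q : ownA (injA q) = Some q by rewrite /ownA /injA enum_rankK.
have ownBB q : ownB (injB q) = Some q by rewrite /ownB /injB enum_rankK.
exists #|G0|, (D sym ownA), (D sym ownB).
have [t1 t2] := transfer (pi := piS sym) (pmap_subseq sym) (erefl _)
   (K := nfa_lang A) (L := nfa_lang B) (K' := dfa_lang (D sym ownA)) (L' := dfa_lang (D sym ownB))
   (fun w a b => nd (ex_intro _ w (conj a b)))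
   (@sound_lang _ _ _ sym ownA)
   (@sound_lang _ _ _ sym ownB)
   (fun x w s h => lift_start symS symA ownAA h s)
   (fun x w s h => lift_start symS symB ownBB h s).
split => //.
- by rewrite !card_sum card_ord; apply: ar1.
- by rewrite card_St card_ord; apply: ar2.
- by rewrite card_St card_ord; apply: ar2.
Qed.
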